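(* Let $\Omega=(G,\Lambda,\sigma)$ with $G=(V,E)$ be a feasible instance of the $q$-state Potts model with activity $0\le\beta<1$, let $v\in V\setminus\Lambda$ and $B=B_\Omega(v)$. Let $u_1v_1,\dots,u_mv_m$ be an enumeration of the edges of $G$ with $u_i\in B$, $v_i\notin B$ (different indices may share the same $u_i$ or $v_i$). Let $E(B)=\{uw\in E:u,w\in B\}$ and $\bar B=\{u\in B:\exists w\notin B, uw\in E\}$. Let $G_B$ be the graph with vertex set $(V\setminus B)\cup\bar B$ and edge set $E\setminus E(B)$, and $\Omega_B=(G_B,\Lambda,\sigma)$. For $\pi\in\mathcal{F}(B)$ write $\pi_i=\pi(u_i)$, and for $i=1,\dots,m$ let $\Omega_i^\pi$ be the instance obtained from $\Omega_B$ by fixing (adding to the pinned set) $u_j$ to color $\pi_j$ for every $j<i$, and deleting the edges $u_jv_j$ for every $j\ge i$. Then for every $\pi\in\mathcal{F}(B)$, $$\Pr_\Omega[c(B)=\pi]=\frac{w_{G[B]}(\pi)\prod_{i=1}^m\bigl(1-(1-\beta)\Pr_{\Omega_i^\pi}[c(v_i)=\pi_i]\bigr)}{\sum_{\rho\in\mathcal{F}(B)}w_{G[B]}(\rho)\prod_{i=1}^m\bigl(1-(1-\beta)\Pr_{\Omega_i^\rho}[c(v_i)=\rho_i]\bigr)}.$$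
   Context: Potts model: fix an integer $q\ge2$ and a real $\beta\ge0$; $[q]=\{1,\dots,q\}$, $0^0=1$. For a finite graph $G=(V,E)$, an instance is $\Omega=(G,\Lambda,\sigma)$ with $\Lambda\subseteq V$, $\sigma\in[q]^\Lambda$; $w_\Omega(\pi)=\beta^{|\{uv\in E:\pi(u)=\pi(v)\}|}$ if $\pi\in[q]^V$ agrees with $\sigma$ on $\Lambda$, else $0$. $\Omega$ is feasible if some $\pi$ has $w_\Omega(\pi)>0$; then $\Pr_\Omega[c(V)=\pi]=w_\Omega(\pi)/\sum_{\pi'}w_\Omega(\pi')$ and $\Pr_\Omega[c(S)=\cdot]$, $\Pr_\Omega[c(v)=\cdot]$ are its marginals (if $v\in\Lambda$ this is the point mass at $\sigma(v)$). For $S\subseteq V$ and $\rho\in[q]^S$, $w_{G[S]}(\rho)=\beta^{|\{uw\in E:u,w\in S,\rho(u)=\rho(w)\}|}$. For $S\subseteq V\setminus\Lambda$, $\mathcal{F}(S)$ is the set of feasible $\rho\in[q]^S$, i.e. those for which some $\pi\in[q]^V$ with $w_\Omega(\pi)>0$ agrees with $\rho$ on $S$. A vertex is low-degree if $\deg_G(v)<\frac{q-1}{1-\beta}-2$. $\partial B=\{u\in V\setminus B:\exists w\in B,uw\in E\}$; $B\subseteq V\setminus\Lambda$ is a permissive block in $\Omega$ if every $u\in\partial B\setminus\Lambda$ is low-degree; $B_\Omega(S)$ is the minimal permissive block containing $S$. *)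

(* Defs.v *)
From HB Require Import structures.
From mathcomp Require Import all_boot all_order all_algebra.
Set Implicit Arguments.
Unset Strict Implicit.
Unset Printing Implicit Defensive.
Import Order.TTheory GRing.Theory Num.Theory.
Local Open Scope ring_scope.

(* Graphs live inside an ambient finite type T.  A graph is a vertex set
   together with a set of edges, each edge being a 2-element subset of T.
   Colours [q] are represented by 'I_q. *)

(* An instance (G, Lambda, sigma) with G = (iV, iE); sigma is given as a total
   function, only its values on Lambda matter. *)
Record instance (T : finType) (q : nat) := Instance {
  iV : {set T};
  iE : {set {set T}};
  iL : {set T};
  isig : T -> 'I_q }.

(* A colouring of a vertex set S (element of [q]^S) is encoded as a finite
   function T -> option 'I_q that is Some exactly on S. *)
Definition on_set (T : finType) (q : nat) (S : {set T})
  (pi : {ffun T -> option 'I_q}) : bool :=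
  [forall x, (pi x != None) == (x \in S)].

Definition mono_count (T : finType) (q : nat) (E : {set {set T}})
  (pi : {ffun T -> option 'I_q}) : nat :=
  #|[set f in E | [forall x in f, forall y in f, pi x == pi y]]|.

Definition weight (R : numDomainType) (beta : R) (T : finType) (q : nat)
  (I : instance T q) (pi : {ffun T -> option 'I_q}) : R :=
  if on_set (iV I) pi && [forall x in iL I, pi x == Some (isig I x)]
  then beta ^+ mono_count (iE I) pi else 0.

Definition partition_fn (R : numDomainType) (beta : R) (T : finType) (q : nat)
  (I : instance T q) : R :=
  \sum_(pi : {ffun T -> option 'I_q}) weight beta I pi.

Definition feasible (R : numDomainType) (beta : R) (T : finType) (q : nat)
  (I : instance T q) : Prop :=
  exists pi : {ffun T -> option 'I_q}, 0 < weight beta I pi.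

Definition PrV (R : numFieldType) (beta : R) (T : finType) (q : nat)
  (I : instance T q) (v : T) (c : option 'I_q) : R :=
  (\sum_(pi : {ffun T -> option 'I_q} | pi v == c) weight beta I pi)
    / partition_fn beta I.

Definition PrS (R : numFieldType) (beta : R) (T : finType) (q : nat)
  (I : instance T q) (S : {set T}) (rho : {ffun T -> option 'I_q}) : R :=
  (\sum_(pi : {ffun T -> option 'I_q} | [forall x in S, pi x == rho x])
      weight beta I pi) / partition_fn beta I.

Definition feasible_set (R : numDomainType) (beta : R) (T : finType) (q : nat)
  (I : instance T q) (S : {set T}) : {set {ffun T -> option 'I_q}} :=
  [set rho | on_set S rho &&
     [exists pi, (0 < weight beta I pi) && [forall x in S, pi x == rho x]]].

Definition w_sub (R : numDomainType) (beta : R) (T : finType) (q : nat)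
  (E : {set {set T}}) (S : {set T}) (rho : {ffun T -> option 'I_q}) : R :=
  beta ^+ #|[set f in E | (f \subset S) &&
                [forall x in f, forall y in f, rho x == rho y]]|.

Definition degree (T : finType) (E : {set {set T}}) (v : T) : nat :=
  #|[set f in E | v \in f]|.

Definition low_degree (R : numFieldType) (beta : R) (q : nat) (T : finType)
  (E : {set {set T}}) (v : T) : bool :=
  (degree E v)%:R < (q%:R - 1) / (1 - beta) - 2.

Definition boundary (T : finType) (V : {set T}) (E : {set {set T}})
  (B : {set T}) : {set T} :=
  [set u in V :\: B | [exists w in B, [set u; w] \in E]].

Definition permissive (R : numFieldType) (beta : R) (T : finType) (q : nat)
  (I : instance T q) (B : {set T}) : bool :=
  (B \subset iV I :\: iL I) &&
  [forall u in boundary (iV I) (iE I) B :\: iL I, low_degree beta q (iE I) u].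

Definition inner_edges (T : finType) (E : {set {set T}}) (B : {set T}) :
  {set {set T}} := [set f in E | f \subset B].

Definition inner_boundary (T : finType) (V : {set T}) (E : {set {set T}})
  (B : {set T}) : {set T} :=
  [set u in B | [exists w in V :\: B, [set u; w] \in E]].

(* Main.v *)
Require Import Defs.
From HB Require Import structures.
From mathcomp Require Import all_boot all_order all_algebra.
From mathcomp Require Import ring lra zify.
Set Implicit Arguments.
Unset Strict Implicit.
Unset Printing Implicit Defensive.
Import Order.TTheory GRing.Theory Num.Theory.
Local Open Scope ring_scope.

Lemma weight_ge0 (R : realFieldType) (beta : R) (T : finType) (q : nat)
  (I : instance T q) pi : 0 <= beta -> 0 <= weight beta I pi.
Proof. by move=> b0; rewrite /weight; case: ifP => // _; exact: exprn_ge0. Qed.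

Lemma weight_nz_pin (R : realFieldType) (beta : R) (T : finType) (q : nat)
  (I : instance T q) pi x :
  weight beta I pi != 0 -> x \in iL I -> pi x = Some (isig I x).
Proof.
rewrite /weight; case: ifP => [/andP[_ /forall_inP H] _ xL|]; last by rewrite eqxx.
exact/eqP/H/xL.
Qed.

Lemma weight_nz_on (R : realFieldType) (beta : R) (T : finType) (q : nat)
  (I : instance T q) pi x :
  weight beta I pi != 0 -> (pi x != None) = (x \in iV I).
Proof.
rewrite /weight; case: ifP => [/andP[/forallP H _] _|]; last by rewrite eqxx.
exact: (eqP (H x)).
Qed.

Definition swo q (c d : 'I_q) (o : option 'I_q) :=
  if o == Some c then Some d else if o == Some d then Some c else o.

Lemma swoK q (c d : 'I_q) : involutive (swo c d).
Proof.
move=> o; rewrite /swo.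
case: (eqVneq o (Some c)) => [->|oc]; first by rewrite eqxx; case: eqP.
case: (eqVneq o (Some d)) => [->|od]; first by rewrite eqxx.
by rewrite (negbTE oc) (negbTE od).
Qed.

Lemma swo_none q (c d : 'I_q) o : (swo c d o == None) = (o == None).
Proof. by rewrite /swo; case: (eqVneq o (Some c)) => [->|_] //; case: (eqVneq o (Some d)) => [->|_]. Qed.

Lemma swo_eq q (c d : 'I_q) o : (swo c d o == Some d) = (o == Some c).
Proof.
rewrite /swo; case: (eqVneq o (Some c)) => [_|oc]; first by rewrite !eqxx.
case: (eqVneq o (Some d)) => [od|od]; last by rewrite (negbTE od).
by apply/eqP => -[cd]; move: oc; rewrite od cd eqxx.
Qed.

Definition tau (T : finType) q (u : T) (c d : 'I_q) (pi : {ffun T -> option 'I_q}) :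
  {ffun T -> option 'I_q} :=
  [ffun x => if x == u then swo c d (pi x) else pi x].

Lemma tauK (T : finType) q (u : T) (c d : 'I_q) : involutive (tau u c d).
Proof. by move=> pi; apply/ffunP => x; rewrite !ffunE; case: eqP => // _; rewrite swoK. Qed.

Lemma mono_eq (T : finType) q (pi pi' : {ffun T -> option 'I_q}) (f : {set T}) :
  {in f, pi =1 pi'} ->
  [forall x in f, forall y in f, pi x == pi y] =
  [forall x in f, forall y in f, pi' x == pi' y].
Proof.
move=> H; apply: eq_forallb => x; case xf: (x \in f) => //=.
apply: eq_forallb => y; case yf: (y \in f) => //=.
by rewrite !H.
Qed.

Lemma weight_tau (R : realFieldType) (beta : R) (T : finType) (q : nat)
  (I : instance T q) u c d pi :
  u \notin iL I -> (forall f, f \in iE I -> u \notin f) ->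
  weight beta I (tau u c d pi) = weight beta I pi.
Proof.
move=> uL uE; rewrite /weight; congr (if _ then _ else _).
  congr (_ && _).
    apply: eq_forallb => x; rewrite ffunE; case: (eqVneq x u) => // _.
    by rewrite swo_none.
  apply: eq_forallb => x; rewrite ffunE; case: (eqVneq x u) => [->|//].
  by rewrite (negbTE uL).
congr (_ ^+ _); rewrite /mono_count; apply: eq_card => f.
rewrite !inE; case fE: (f \in iE I) => //=.
apply: mono_eq => x xf; rewrite ffunE; case: eqP => // xu.
by move: (uE f fE); rewrite -xu xf.
Qed.

Lemma sum_sym (R : realFieldType) (beta : R) (T : finType) (q : nat)
  (I : instance T q) u (c d : 'I_q) (G : {ffun T -> option 'I_q} -> R) :
  u \notin iL I -> (forall f, f \in iE I -> u \notin f) ->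
  (forall pi, G (tau u c d pi) = G pi) ->
  \sum_pi weight beta I pi * ((pi u == Some d)%:R * G pi) =
  \sum_pi weight beta I pi * ((pi u == Some c)%:R * G pi).
Proof.
move=> uL uE HG.
rewrite (reindex_inj (can_inj (tauK u c d))) /=.
apply: eq_bigr => pi _; rewrite weight_tau // HG ffunE eqxx swo_eq //.
Qed.

Lemma sum_q (R : realFieldType) (beta : R) (T : finType) (q : nat)
  (I : instance T q) u (c : 'I_q) (G : {ffun T -> option 'I_q} -> R) :
  u \in iV I -> u \notin iL I -> (forall f, f \in iE I -> u \notin f) ->
  (forall c d pi, G (tau u c d pi) = G pi) ->
  \sum_pi weight beta I pi * G pi =
  q%:R * \sum_pi weight beta I pi * ((pi u == Some c)%:R * G pi).
Proof.
move=> uV uL uE HG.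
have E1 pi : weight beta I pi * G pi =
    \sum_(d : 'I_q) weight beta I pi * ((pi u == Some d)%:R * G pi).
  case: (eqVneq (weight beta I pi) 0) => [->|nz].
    by rewrite mul0r big1 // => d _; rewrite mul0r.
  have := weight_nz_on u nz; rewrite uV; case E: (pi u) => [d0|] // _.
  rewrite (bigD1 d0) //= eqxx mul1r big1 ?addr0 // => d dd0.
  have -> : (Some d0 == Some d) = false by apply/eqP => -[]; apply/eqP; rewrite eq_sym.
  by rewrite mul0r mulr0.
rewrite (eq_bigr _ (fun pi _ => E1 pi)) exchange_big /=.
under eq_bigr => d _ do rewrite (@sum_sym _ beta _ _ I u c d G uL uE (HG c d)).
by rewrite sumr_const card_ord mulr_natl.
Qed.

Lemma set2_other (T : finType) (x y u : T) :
  u \in [set x; y] -> exists z, [set x; y] = [set u; z].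
Proof. by rewrite !inE => /orP[]/eqP->; [exists y | exists x; rewrite setUC]. Qed.

Lemma mono2 (T : finType) q (pi : {ffun T -> option 'I_q}) (u w : T) :
  [forall x in [set u; w], forall y in [set u; w], pi x == pi y] = (pi u == pi w).
Proof.
apply/forall_inP/eqP => [H|H x].
  by move/forall_inP: (H u (set21 u w)) => /(_ w (set22 u w))/eqP.
rewrite !inE => /orP[]/eqP->; apply/forall_inP => y;
  rewrite !inE => /orP[]/eqP->; rewrite ?H //.
Qed.

Lemma weight_step (R : realFieldType) (beta : R) (T : finType) (q : nat)
  (I I' : instance T q) (u w : T) pi :
  iV I' = iV I -> iE I' = [set u; w] |: iE I -> [set u; w] \notin iE I ->
  iL I' = u |: iL I -> isig I' =1 isig I ->
  weight beta I' pi =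
  weight beta I pi * ((pi u == Some (isig I u))%:R * beta ^+ (pi u == pi w)).
Proof.
move=> HV HE Hn HL Hs; rewrite /weight HV HL.
have Hp : [forall x in u |: iL I, pi x == Some (isig I' x)] =
    (pi u == Some (isig I u)) && [forall x in iL I, pi x == Some (isig I x)].
  apply/forall_inP/andP => [H|[H1 /forall_inP H2] x].
    split; first by rewrite -Hs; apply: H; rewrite setU11.
    by apply/forall_inP => x xL; rewrite -Hs; apply: H; rewrite setU1r.
  by rewrite in_setU1 Hs => /orP[/eqP->|xL] //; exact: H2.
have Hm : mono_count (iE I') pi = ((pi u == pi w) + mono_count (iE I) pi)%N.
  rewrite /mono_count HE; case: (boolP (pi u == pi w)) => h.
    have -> : [set f in [set u; w] |: iE I |
                 [forall x in f, forall y in f, pi x == pi y]] =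
              [set u; w] |: [set f in iE I |
                 [forall x in f, forall y in f, pi x == pi y]].
      apply/setP => f; rewrite in_setU1 !inE.
      by case: eqVneq => [->|] //=; rewrite mono2 h.
    by rewrite cardsU1 inE (negbTE Hn).
  apply: eq_card => f; rewrite !inE.
  by case: eqVneq => [->|] //=; rewrite mono2 (negbTE h) andbF.
rewrite Hp Hm; case: (pi u == Some (isig I u)) => /=;
  rewrite ?mul0r ?mulr0 ?mul1r ?andbF ?if_same //.
by case: ifP => _; rewrite ?mul0r // exprD mulrC.
Qed.

Lemma sum_nz (R : realFieldType) (T : finType) (P : pred T) (F : T -> R) :
  \sum_(x | P x) F x = \sum_(x | P x && (F x != 0)) F x.
Proof.
rewrite (bigID (fun x => F x != 0)) /= [X in _ + X]big1 ?addr0 //.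
by move=> x /andP[_ /negPn/eqP].
Qed.


Unset Implicit Arguments.
Set Strict Implicit.

Theorem mainTheorem6 (R : realFieldType) (q : nat) (beta : R) (T : finType)
  (E : {set {set T}}) (L : {set T}) (sigma : T -> 'I_q) (v : T)
  (B : {set T}) (s : seq (T * T)) (rho : {ffun T -> option 'I_q}) :
  (2 <= q)%N -> 0 <= beta -> beta < 1 ->
  (forall f, f \in E -> #|f| = 2%N) ->
  let Om := Instance [set: T] E L sigma in
  feasible beta Om ->
  v \notin L ->
  minset (fun X : {set T} => permissive beta Om X && (v \in X)) B ->
  uniq s ->
  (forall u w, ((u, w) \in s) = [&& [set u; w] \in E, u \in B & w \notin B]) ->
  rho \in feasible_set beta Om B ->
  let m := size s in
  let ui := fun j : nat => (nth (v, v) s j).1 in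
  let vi := fun j : nat => (nth (v, v) s j).2 in
  let VB := (~: B) :|: inner_boundary [set: T] E B in
  let EB := E :\: inner_edges E B in
  let Omi := fun (r : {ffun T -> option 'I_q}) (i : 'I_m) =>
    Instance VB
      (EB :\: [set [set ui j; vi j] | j : 'I_m & (i <= j)%N])
      (L :|: [set ui j | j : 'I_m & (j < i)%N])
      (fun x => if x \in L then sigma x else odflt (sigma x) (r x)) in
  let F := fun r : {ffun T -> option 'I_q} =>
    w_sub beta E B r *
    \prod_(i < m) (1 - (1 - beta) * PrV beta (Omi r i) (vi i) (r (ui i))) in
  PrS beta Om B rho = F rho / \sum_(r in feasible_set beta Om B) F r.
Proof.
move=> q2 b0 b1 E2 Om feas vL minB us sP rhoF m ui vi VB EB Omi F.
have BL : forall x, x \in B -> x \notin L.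
  move: minB => /minsetP[/andP[/andP[/subsetP sub _] _] _] x /sub.
  by rewrite !inE => /andP[].
have memS : forall j : 'I_m, [&& [set ui j; vi j] \in E, ui j \in B & vi j \notin B].
  by move=> j; rewrite -sP /ui /vi -surjective_pairing mem_nth.
have inj_e : forall j k : 'I_m, [set ui j; vi j] = [set ui k; vi k] -> j = k.
  move=> j k ejk.
  have /and3P[_ ujB vjB] := memS j; have /and3P[_ ukB vkB] := memS k.
  have hu : ui j = ui k.
    have : ui j \in [set ui k; vi k] by rewrite -ejk set21.
    by rewrite !inE => /orP[/eqP//|/eqP h]; move: vkB; rewrite -h ujB.
  have hv : vi j = vi k.
    have : vi j \in [set ui k; vi k] by rewrite -ejk set22.
    by rewrite !inE => /orP[/eqP h|/eqP//]; move: vjB; rewrite h ukB.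
  have : nth (v, v) s j = nth (v, v) s k.
    by rewrite [LHS]surjective_pairing [RHS]surjective_pairing; exact: (congr2 pair hu hv).
  by move/eqP; rewrite nth_uniq // => /eqP; apply: val_inj.
have exS : forall x w, [set x; w] \in E -> x \in B -> w \notin B ->
    exists j : 'I_m, ui j = x /\ vi j = w.
  move=> x w h1 h2 h3; have hs : (x, w) \in s by rewrite sP h1 h2 h3.
  have hi : (index (x, w) s < m)%N by rewrite index_mem.
  by exists (Ordinal hi); rewrite /ui /vi /= nth_index.
have edge2 : forall f, f \in E -> exists x y, x != y /\ f = [set x; y].
  by move=> f /E2 /eqP /cards2P.
have inVB : forall f, f \in E -> ~~ (f \subset B) -> forall x, x \in f -> x \in VB.
  move=> f fE nsub x xf.
  case: (boolP (x \in B)) => xB; last by rewrite /VB !inE xB.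
  have [a [b [_ fab]]] := edge2 f fE.
  move: xf; rewrite fab => /set2_other [z fz].
  have zB : z \notin B.
    apply: contra nsub => zB; rewrite fab fz; apply/subsetP => t.
    by rewrite !inE => /orP[]/eqP->.
  rewrite /VB /inner_boundary !inE xB /=; apply/existsP; exists z.
  by rewrite !inE zB /= -fz -fab fE.
have bbar : forall x, x \in B -> x \in VB -> exists j : 'I_m, ui j = x.
  move=> x xB; rewrite /VB /inner_boundary !inE xB /= => /existsP[w].
  rewrite !inE => /andP[/andP[wB _] xwE].
  by have [j [h _]] := exS x w xwE xB wB; exists j.
have uiVB : forall j : 'I_m, ui j \in VB.
  move=> j; have /and3P[h1 h2 h3] := memS j.
  apply: (inVB _ h1) (set21 _ _).
  by apply/negP => /subsetP /(_ (vi j) (set22 _ _)); rewrite (negbTE h3).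
set FB := feasible_set beta Om B.
have rB : forall r, r \in FB -> forall x, (r x != None) = (x \in B).
  by move=> r; rewrite inE => /andP[/forallP H _] x; exact: (eqP (H x)).
pose D := fun k : nat => [set [set ui j; vi j] | j : 'I_m & (k <= j)%N].
pose U := fun k : nat => [set ui j | j : 'I_m & (j < k)%N].
pose sg := fun (r : {ffun T -> option 'I_q}) x =>
  if x \in L then sigma x else odflt (sigma x) (r x).
pose J := fun r (k : nat) => Instance VB (EB :\: D k) (L :|: U k) (sg r).
have OmiJ : forall r (i : 'I_m), Omi r i = J r i by [].
pose Z := fun (r : {ffun T -> option 'I_q}) (k : nat) => partition_fn beta (J r k).
pose S := fun (r : {ffun T -> option 'I_q}) (k : nat) =>
  \sum_(pi : {ffun T -> option 'I_q} | pi (vi k) == r (ui k)) weight beta (J r k) pi.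
pose c := fun k => if ui k \in U k then (1 : R) else q%:R^-1.
have hD : forall k, (k < m)%N -> forall f,
    (f \in D k) = (f == [set ui k; vi k]) || (f \in D k.+1).
  move=> k km f; apply/imsetP/orP => [[j]|].
    rewrite inE => kj ->; rewrite leq_eqVlt in kj; case/orP: kj => [/eqP kj|kj].
      by left; rewrite -kj.
    by right; apply/imsetP; exists j; rewrite ?inE.
  case => [/eqP->|/imsetP[j]]; first by exists (Ordinal km); rewrite ?inE.
  by rewrite inE => kj ->; exists j; rewrite // inE ltnW.
have hU : forall k, (k < m)%N -> U k.+1 = ui k |: U k.
  move=> k km; apply/setP => x; rewrite in_setU1; apply/imsetP/orP => [[j]|].
    rewrite inE ltnS leq_eqVlt => /orP[/eqP kj|kj] ->; first by left; rewrite kj.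
    by right; apply/imsetP; exists j; rewrite ?inE.
  case => [/eqP->|/imsetP[j]]; first by exists (Ordinal km); rewrite ?inE.
  by rewrite inE => kj ->; exists j; rewrite // inE ltnW.
have hU0 : U 0%N = set0.
  by apply/setP => x; rewrite inE; apply/negbTE/negP => /imsetP[j]; rewrite inE ltn0.
have hDm : D m = set0.
  apply/setP => x; rewrite inE; apply/negbTE/negP => /imsetP[j].
  by rewrite inE leqNgt ltn_ord.
have qnz : (q%:R : R) != 0 by rewrite pnatr_eq0 -lt0n (leq_trans _ q2).
have step : forall r, r \in FB -> forall k, (k < m)%N ->
    Z r k.+1 = c k * (Z r k - (1 - beta) * S r k).
  move=> r rF k km.
  have := memS (Ordinal km) => /= /and3P[uwE uB wB].
  have uL := BL _ uB.
  have ru : r (ui k) = Some (sg r (ui k)).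
    have := rB r rF (ui k); rewrite uB /sg (negbTE uL).
    by case: (r (ui k)).
  have uw : ui k != vi k by apply: contraNneq wB => <-.
  have eEB : [set ui k; vi k] \in EB.
    rewrite /EB /inner_edges !inE uwE /= andbT.
    by apply/negP => /subsetP /(_ (vi k) (set22 _ _)); rewrite (negbTE wB).
  have eND : [set ui k; vi k] \notin D k.+1.
    apply/imsetP => -[j]; rewrite inE => kj /(inj_e (Ordinal km) j) h.
    by rewrite -h /= ltnn in kj.
  have Hw : forall pi, weight beta (J r k.+1) pi = weight beta (J r k) pi *
      ((pi (ui k) == r (ui k))%:R * beta ^+ (pi (ui k) == pi (vi k))).
    move=> pi; rewrite ru; apply: weight_step => //=.
    - apply/setP => f; rewrite in_setU1 !in_setD (hD k km f).
      by case: eqVneq => [->|] //=; rewrite eND; move: eEB; rewrite /EB /inner_edges !inE.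
    - by rewrite in_setD (hD k km) eqxx.
    - by rewrite (hU k km) setUCA.
  have Gid : forall G : {ffun T -> option 'I_q} -> R,
      (forall c d pi, G (tau (ui k) c d pi) = G pi) ->
      \sum_pi weight beta (J r k) pi * ((pi (ui k) == r (ui k))%:R * G pi) =
      c k * \sum_pi weight beta (J r k) pi * G pi.
    move=> G HG; rewrite /c; case: ifP => uU.
      rewrite mul1r; apply: eq_bigr => pi _.
      case: (eqVneq (weight beta (J r k) pi) 0) => [->|nz]; first by rewrite !mul0r.
      have uiL : ui k \in iL (J r k) by rewrite /= in_setU uU orbT.
      by rewrite (weight_nz_pin nz uiL) /= -ru eqxx mul1r.
    have uL' : ui k \notin iL (J r k) by rewrite /= in_setU negb_or uL uU.
    have isol : forall f, f \in iE (J r k) -> ui k \notin f.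
      move=> f; rewrite /= !inE => /andP[fD].
      move=> /andP[nsub fE]; rewrite fE /= in nsub.
      apply/negP => uf.
      have [a [b [_ fab]]] := edge2 f fE.
      move: uf; rewrite fab => /set2_other [z fz].
      have zB : z \notin B.
        apply: contra nsub => zB; rewrite fab fz; apply/subsetP => t.
        by rewrite !inE => /orP[]/eqP->.
      have fzE : [set ui k; z] \in E by rewrite -fz -fab.
      have [j [hj1 hj2]] := exS (ui k) z fzE uB zB.
      case: (leqP k j) => kj.
        by move: fD; rewrite fab fz -hj1 -hj2; apply/negP/negPn/imsetP; exists j; rewrite ?inE.
      by move: uU; rewrite -hj1 => /negbT/negP; apply; apply/imsetP; exists j; rewrite ?inE.
    have uV : ui k \in iV (J r k) by exact: (uiVB (Ordinal km)).
    rewrite ru [in RHS](sum_q beta (sg r (ui k)) uV uL' isol HG).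
    by rewrite mulrA mulVf // mul1r.
  have wu : (vi k == ui k) = false by apply/negbTE; rewrite eq_sym.
  have HS : S r k = \sum_pi weight beta (J r k) pi * (pi (vi k) == r (ui k))%:R.
    rewrite /S big_mkcond; apply: eq_bigr => pi _.
    by case: ifP; rewrite ?mulr1 ?mulr0.
  have -> : Z r k.+1 =
      \sum_pi weight beta (J r k) pi * ((pi (ui k) == r (ui k))%:R * 1) -
      (1 - beta) * \sum_pi weight beta (J r k) pi *
          ((pi (ui k) == r (ui k))%:R * (pi (vi k) == r (ui k))%:R).
    rewrite /Z /partition_fn mulr_sumr -sumrB; apply: eq_bigr => pi _.
    rewrite Hw; case: (eqVneq (pi (ui k)) (r (ui k))) => [e|ne].
      rewrite e eq_sym; case: (_ == _) => /=; rewrite ?expr0 ?expr1; ring.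
    rewrite /=; ring.
  rewrite !Gid; last 2 first.
  - by move=> c0 d0 pi; rewrite ffunE wu.
  - by move=> c0 d0 pi.
  have -> : \sum_pi weight beta (J r k) pi * 1 = Z r k.
    by rewrite /Z /partition_fn; apply: eq_bigr => pi _; rewrite mulr1.
  rewrite HS; ring.
pose N := fun r : {ffun T -> option 'I_q} =>
  \sum_(pi : {ffun T -> option 'I_q} | [forall x in B, pi x == r x])
     weight beta Om pi.
have HB : forall r, r \in FB -> N r = w_sub beta E B r * Z r m.
  move=> r rF.
  pose psi := fun pi : {ffun T -> option 'I_q} =>
    [ffun x => if x \in VB then pi x else None].
  pose phi := fun pi : {ffun T -> option 'I_q} =>
    [ffun x => if x \in B then r x else pi x].
  have rS : forall x, x \in B -> r x = Some (sg r x).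
    move=> x xB; have := rB r rF x; rewrite xB /sg (negbTE (BL x xB)).
    by case: (r x).
  have Um : forall x, x \in B -> x \in VB -> x \in iL (J r m).
    move=> x xB xV; have [j hj] := bbar x xB xV.
    by rewrite /= in_setU; apply/orP; right; apply/imsetP; exists j; rewrite ?inE ?hj.
  have core : forall pi : {ffun T -> option 'I_q}, [forall x in B, pi x == r x] ->
      weight beta Om pi = w_sub beta E B r * weight beta (J r m) (psi pi).
    move=> pi ag.
    have agx : forall x, x \in B -> pi x = r x.
      by move=> x /(forall_inP ag)/eqP.
    have psiV : forall x, x \in VB -> psi pi x = pi x.
      by move=> x xV; rewrite ffunE xV.
    have LV : forall x, x \in L -> x \in VB.
      move=> x xL; have xB : x \notin B := contraTN (BL x) xL.
      by rewrite /VB !inE xB.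
    rewrite /weight /=.
    have Hon : on_set [set: T] pi = on_set VB (psi pi).
      apply: eq_forallb => x; rewrite ffunE in_setT.
      case xV: (x \in VB) => //.
      have xB : x \in B by move: xV; rewrite /VB !inE; case: (x \in B).
      by rewrite agx // (rB r rF) xB.
    have Hpin : [forall x in L, pi x == Some (sigma x)] =
        [forall x in L :|: U m, psi pi x == Some (sg r x)].
      apply/forall_inP/forall_inP => H x.
        rewrite in_setU => /orP[xL|/imsetP[j _ ->]].
          by rewrite psiV ?LV // /sg xL; exact: H.
        have /and3P[_ uB _] := memS j.
        by rewrite psiV ?uiVB // agx // rS // eqxx.
      move=> xL; have := H x; rewrite in_setU xL psiV ?LV // /sg xL.
      by apply.
    have Hmono : mono_count E pi =
        (#|[set f in E | (f \subset B) &&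
              [forall x in f, forall y in f, r x == r y]]|
         + mono_count (EB :\: D m) (psi pi))%N.
      rewrite hDm setD0 /mono_count -(cardsID [set f : {set T} | f \subset B]).
      congr (_ + _)%N; apply: eq_card => f; rewrite !inE.
        case fE: (f \in E) => //=; case fB: (f \subset B) => /=; rewrite ?andbF //.
        rewrite andbT; apply: mono_eq => x xf; apply: agx; exact: (subsetP fB).
      case fE: (f \in E) => //=; case fB: (f \subset B) => //=.
      apply: mono_eq => x xf.
      by rewrite psiV // (inVB f fE (negbT fB) x xf).
    rewrite Hon Hpin Hmono /w_sub.
    by case: ifP => _; [rewrite exprD | rewrite mulr0].
  rewrite /Z /partition_fn (sum_nz xpredT).
  rewrite (reindex_onto psi phi) /=; last first.
    move=> pi' /= nz; apply/ffunP => x; rewrite !ffunE.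
    case xV: (x \in VB); last first.
      by have := weight_nz_on x nz; rewrite /= xV; case: (pi' x).
    case xB: (x \in B) => //.
    by rewrite (weight_nz_pin nz (Um x xB xV)) /= rS.
  rewrite mulr_sumr /N big_mkcond [RHS]big_mkcond; apply: eq_bigr => pi _ /=.
  have Hag : (phi (psi pi) == pi) = [forall x in B, pi x == r x].
    apply/eqP/forall_inP => [<- x xB | H]; first by rewrite !ffunE xB.
    apply/ffunP => x; rewrite !ffunE; case: ifP => xB; first by rewrite (eqP (H x xB)).
    have xV : x \in VB by rewrite /VB !inE xB.
    by rewrite xV.
  rewrite Hag; case: ifP => ag; last by rewrite andbF.
  rewrite andbT core //.
  by case: (eqVneq (weight beta (J r m) (psi pi)) 0) => [->|_] /=; rewrite ?mulr0.
have Npos : forall r, r \in FB -> 0 < N r.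
  move=> r; rewrite /FB inE => /andP[_ /existsP[pi /andP[wp ag]]].
  rewrite /N (bigD1 pi) //=.
  have : 0 <= \sum_(i : {ffun T -> option 'I_q} | [forall x in B, i x == r x] && (i != pi)) weight beta Om i.
    by apply: sumr_ge0 => i _; apply: weight_ge0.
  move: wp; lra.
have HC : partition_fn beta Om = \sum_(r in FB) N r.
  pose res := fun pi : {ffun T -> option 'I_q} =>
    [ffun x => if x \in B then pi x else None].
  rewrite /partition_fn (sum_nz xpredT) (partition_big res (mem FB)) /=; last first.
    move=> pi nz; rewrite /FB inE; apply/andP; split.
      apply/forallP => x; rewrite ffunE; case: ifP => xB //.
      by rewrite (weight_nz_on x nz) /= in_setT.
    apply/existsP; exists pi; rewrite lt0r nz weight_ge0 //=.
    by apply/forall_inP => x xB; rewrite ffunE xB.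
  apply: eq_bigr => r rF.
  rewrite /N (sum_nz (fun pi : {ffun T -> option 'I_q} => [forall x in B, pi x == r x])).
  apply: eq_bigl => pi /=.
  case nz: (weight beta Om pi != 0); rewrite ?andbF ?andbT //.
  apply/eqP/forall_inP => [<- x xB | H]; first by rewrite ffunE xB.
  apply/ffunP => x; rewrite ffunE; case: ifP => xB; first by rewrite (eqP (H x xB)).
  by have := rB r rF x; rewrite xB; case: (r x).
have SZ : forall r k, 0 <= S r k /\ S r k <= Z r k.
  move=> r k; split; first by apply: sumr_ge0 => pi _; exact: weight_ge0.
  rewrite /S /Z /partition_fn big_mkcond; apply: ler_sum => pi _.
  by case: ifP => _; rewrite ?lexx ?weight_ge0.
have Znz : forall r, r \in FB -> forall k, (k <= m)%N -> Z r k != 0.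
  move=> r rF.
  have Zm : Z r m != 0.
    have := Npos r rF; rewrite (HB r rF); apply: contraTneq => ->.
    by rewrite mulr0 ltxx.
  suff H : forall d, (d <= m)%N -> Z r (m - d)%N != 0.
    by move=> k km; rewrite -(subKn km); apply: H; rewrite leq_subr.
  elim=> [|d IH] dm; first by rewrite subn0.
  have km : (m - d.+1 < m)%N by lia.
  have e : (m - d.+1).+1 = (m - d)%N by lia.
  apply/eqP => Z0; have := IH (ltnW dm).
  rewrite -e (step r rF _ km) Z0.
  have [S0 S1] := SZ r (m - d.+1)%N; rewrite Z0 in S1.
  have -> : S r (m - d.+1)%N = 0 by apply/eqP; rewrite eq_le S1 S0.
  by rewrite mulr0 subrr mulr0 eqxx.
have HZ0 : forall r, Z r 0%N = Z rho 0%N.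
  move=> r; rewrite /Z /partition_fn; apply: eq_bigr => pi _.
  rewrite /weight /= hU0 setU0.
  congr (if _ && _ then _ else _).
  apply: eq_forallb => x; case xL: (x \in L) => //=.
  by rewrite /sg xL.
have cnz : forall k, c k != 0.
  by move=> k; rewrite /c; case: ifP => _; rewrite ?oner_neq0 ?invr_eq0.
pose Tm := fun (r : {ffun T -> option 'I_q}) (k : nat) =>
  1 - (1 - beta) * PrV beta (J r k) (vi k) (r (ui k)).
have tele : forall r, r \in FB -> forall n, (n <= m)%N ->
    \prod_(0 <= i < n) Tm r i = Z r n / Z r 0%N * \prod_(0 <= i < n) (c i)^-1.
  move=> r rF; elim=> [|n IH] nm.
    by rewrite !big_geq // divff ?mulr1 // Znz.
  rewrite !big_nat_recr //= IH ?(ltnW nm) //.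
  rewrite /Tm (_ : PrV beta (J r n) (vi n) (r (ui n)) = S r n / Z r n) //.
  have Zn := Znz r rF n (ltnW nm); have Z0 := Znz r rF 0%N (leq0n _).
  have cn := cnz n.
  rewrite (step r rF n nm); field.
  by rewrite Zn Z0 cn.
pose K := \prod_(0 <= i < m) (c i)^-1.
have HF : forall r, r \in FB -> F r = N r * (K / Z rho 0%N).
  move=> r rF; rewrite /F.
  have -> : \prod_(i < m) (1 - (1 - beta) * PrV beta (Omi r i) (vi i) (r (ui i))) =
      \prod_(0 <= i < m) Tm r i by rewrite big_mkord.
  rewrite tele // HB // HZ0 /K; ring.
have anz : K / Z rho 0%N != 0.
  rewrite mulf_neq0 // ?invr_eq0 ?Znz //.
  by rewrite /K prodf_seq_neq0; apply/allP => i _ /=; rewrite invr_eq0 cnz.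
rewrite /PrS -/(N rho) HC (HF rho rhoF) (eq_bigr _ HF) -mulr_suml.
by rewrite invfM mulrACA mulfV ?mulr1.
Qed.
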